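(* For $1\le\sigma\le2$ and $t\ge 500$, $$|\zeta(\sigma+it)|<\log t-0.14.$$
   Context: $\zeta$ denotes the Riemann zeta function. *)

(* Defs.v *)
From Stdlib Require Import Reals.
From Coquelicot Require Import Coquelicot.
Open Scope R_scope.

Definition cpow (x : R) (s : C) : C :=
  (Rpower x (Re s) * cos (Im s * ln x), Rpower x (Re s) * sin (Im s * ln x)).

Definition zeta_approx (s : C) (N : nat) : C :=
  Cminus (sum_n (fun k => cpow (INR (S k)) (Copp s)) N)
         (Cdiv (cpow (INR (S N)) (Cminus 1 s)) (Cminus 1 s)).

(* Riemann zeta function on Re s > 0, s <> 1 (analytic continuation):
   zeta(s) = lim_{N -> oo} ( sum_{n <= N} n^{-s} - N^{1-s}/(1-s) ).
   For Re s > 1 this is the Dirichlet series sum n^{-s}. *)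
Definition zeta (s : C) : C :=
  (real (Lim_seq (fun N => Re (zeta_approx s N))),
   real (Lim_seq (fun N => Im (zeta_approx s N)))).

(* Main.v *)
Require Import Defs.
From Stdlib Require Import Reals Lra Psatz.
From Coquelicot Require Import Coquelicot.
Open Scope R_scope.


Lemma cont_of_der (f df : R -> R) x : is_derive f x (df x) -> continuity_pt f x.
Proof.
  intros H. apply derivable_continuous_pt. exists (df x).
  now apply is_derive_Reals.
Qed.

Lemma cmp_le (f g df dg : R -> R) a b : a <= b ->
  (forall x, a <= x <= b -> is_derive f x (df x) /\ is_derive g x (dg x) /\ df x <= dg x) ->
  f b - f a <= g b - g a.
Proof.
  intros Hab H.
  destruct (MVT_gen (fun x => g x - f x) a b (fun x => dg x - df x)) as [c [Hc Hm]].
  - intros x Hx. rewrite Rmin_left in Hx by lra. rewrite Rmax_right in Hx by lra.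
    destruct (H x ltac:(lra)) as [H1 [H2 H3]].
    apply (is_derive_minus g f x (dg x) (df x)); auto.
  - intros x Hx. rewrite Rmin_left in Hx by lra. rewrite Rmax_right in Hx by lra.
    destruct (H x ltac:(lra)) as [H1 [H2 H3]].
    apply continuity_pt_minus.
    + apply (cont_of_der g dg); auto.
    + apply (cont_of_der f df); auto.
  - rewrite Rmin_left in Hc by lra. rewrite Rmax_right in Hc by lra.
    destruct (H c Hc) as [_ [_ H3]]. 
    assert (0 <= (dg c - df c) * (b - a)) by (apply Rmult_le_pos; lra).
    lra.
Qed.

Lemma cmp (f g df dg : R -> R) a b : a <= b ->
  (forall x, a <= x <= b -> is_derive f x (df x) /\ is_derive g x (dg x) /\ Rabs (df x) <= dg x) ->
  Rabs (f b - f a) <= g b - g a.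
Proof.
  intros Hab H. apply Rabs_le. split.
  - assert (- f b - - f a <= g b - g a); [|lra].
    apply (cmp_le (fun x => - f x) g (fun x => - df x) dg a b Hab).
    intros x Hx. destruct (H x Hx) as [H1 [H2 H3]]. split; [|split]; auto.
    + apply (is_derive_opp f x (df x)); auto.
    + cbv beta. apply Rabs_le_between in H3. lra.
  - apply (cmp_le f g df dg a b Hab).
    intros x Hx. destruct (H x Hx) as [H1 [H2 H3]]. split; [|split]; auto.
    apply Rabs_le_between in H3. lra.
Qed.

Lemma der_eq (f : R -> R) x l l' : is_derive f x l -> l = l' -> is_derive f x l'.
Proof. intros H ->; exact H. Qed.

Lemma der_const (a x : R) : is_derive (fun _ => a) x 0.
Proof. auto_derive; auto. Qed.

Lemma der_shift_p (F : R -> R) c y d : is_derive F (c + y) d -> is_derive (fun y => F (c + y)) y d.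
Proof.
  intros H. apply der_eq with (scal 1 d).
  - apply (is_derive_comp F (fun y => c + y) y d 1); auto.
    auto_derive; auto; ring.
  - unfold scal; simpl; unfold mult; simpl. ring.
Qed.

Lemma der_shift_m (F : R -> R) c y d : is_derive F (c - y) d -> is_derive (fun y => F (c - y)) y (- d).
Proof.
  intros H. apply der_eq with (scal (-1) d).
  - apply (is_derive_comp F (fun y => c - y) y d (-1)); auto.
    auto_derive; auto; ring.
  - unfold scal; simpl; unfold mult; simpl. ring.
Qed.

Lemma midpoint (H G G1 G2 : R -> R) c M :
 (forall x, c - /2 <= x <= c + /2 -> is_derive H x (G x) /\ is_derive G x (G1 x) /\
     is_derive G1 x (G2 x) /\ Rabs (G2 x) <= M) ->
 Rabs (G c - (H (c + /2) - H (c - /2))) <= M / 24.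
Proof.
  intros HD.
  assert (S1 : forall y, 0 <= y <= /2 -> Rabs (G1 (c + y) - G1 (c - y)) <= 2 * M * y).
  { intros y Hy.
    assert (E : Rabs (G1 (c + y) - G1 (c - y)) <= M * (c + y) - M * (c - y)).
    { apply (cmp G1 (fun x => M * x) G2 (fun _ => M)); [lra|].
      intros x Hx. destruct (HD x ltac:(lra)) as [_ [_ [A B]]].
      split; [exact A|split; [|exact B]].
      auto_derive; auto; ring. }
    lra. }
  assert (S2 : forall h, 0 <= h <= /2 -> Rabs (G (c + h) + G (c - h) - 2 * G c) <= M * h ^ 2).
  { intros h Hh.
    assert (E : Rabs ((G (c + h) + G (c - h) - 2 * G c) - (G (c + 0) + G (c - 0) - 2 * G c))
               <= M * h ^ 2 - M * 0 ^ 2).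
    { apply (cmp (fun y => G (c + y) + G (c - y) - 2 * G c) (fun y => M * y ^ 2)
                 (fun y => G1 (c + y) - G1 (c - y)) (fun y => 2 * M * y)); [lra|].
      intros y Hy. split; [|split].
      - apply der_eq with (G1 (c + y) + - G1 (c - y) - 0).
        + apply (is_derive_minus (fun y => G (c + y) + G (c - y)) (fun _ => 2 * G c)).
          2: apply der_const.
          apply (is_derive_plus (fun y => G (c + y)) (fun y => G (c - y))).
          * apply der_shift_p. apply (HD (c + y) ltac:(lra)).
          * apply der_shift_m. apply (HD (c - y) ltac:(lra)).
        + lra.
      - auto_derive; auto. ring.
      - apply S1; lra. }
    replace (c + 0) with c in E by ring. replace (c - 0) with c in E by ring.
    replace (G c + G c - 2 * G c) with 0 in E by ring. replace (M * 0 ^ 2) with 0 in E by ring. rewrite !Rminus_0_r in E. lra. }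
  assert (E : Rabs ((H (c + /2) - H (c - /2) - 2 * /2 * G c) - (H (c + 0) - H (c - 0) - 2 * 0 * G c))
               <= M * (/2) ^ 3 / 3 - M * 0 ^ 3 / 3).
  { apply (cmp (fun y => H (c + y) - H (c - y) - 2 * y * G c) (fun y => M * y ^ 3 / 3)
               (fun y => G (c + y) + G (c - y) - 2 * G c) (fun y => M * y ^ 2)); [lra|].
    intros y Hy. split; [|split].
    - apply der_eq with (G (c + y) - - G (c - y) - 2 * G c).
      + apply (is_derive_minus (fun y => H (c + y) - H (c - y)) (fun y => 2 * y * G c)).
        * apply (is_derive_minus (fun y => H (c + y)) (fun y => H (c - y))).
          -- apply der_shift_p. apply (HD (c + y) ltac:(lra)).
          -- apply der_shift_m. apply (HD (c - y) ltac:(lra)).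
        * auto_derive; auto. ring.
      + lra.
    - auto_derive; auto. field.
    - apply S2; lra. }
  replace (c + 0) with c in E by ring. replace (c - 0) with c in E by ring.
  replace (H (c + / 2) - H (c - / 2) - 2 * / 2 * G c - (H c - H c - 2 * 0 * G c))
    with (- (G c - (H (c + / 2) - H (c - / 2)))) in E by field.
  rewrite Rabs_Ropp in E. lra.
Qed.

Definition P (a A B t x : R) := Rpower x a * (A * cos (t * ln x) + B * sin (t * ln x)).

Lemma P_der a A B t x : 0 < x ->
  is_derive (P a A B t) x (P (a-1) (a*A + t*B) (a*B - t*A) t x).
Proof.
  intros Hx. unfold P, Rpower. auto_derive; auto.
  replace ((a - 1) * ln x) with (a * ln x + - ln x) by ring.
  rewrite exp_plus, exp_Ropp, exp_ln by auto. field. lra.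
Qed.

Lemma trig_bound A B R th : A^2 + B^2 <= R^2 -> 0 <= R ->
  Rabs (A * cos th + B * sin th) <= R.
Proof.
  intros H1 H2. pose proof (sin2_cos2 th) as E. unfold Rsqr in E.
  assert (K : (A * cos th + B * sin th)^2 <= R^2).
  { assert (0 <= (A * sin th - B * cos th)^2) by apply pow2_ge_0. nra. }
  apply Rabs_le. split; nra.
Qed.

Lemma P_bound a A B t x R : A^2 + B^2 <= R^2 -> 0 <= R ->
  Rabs (P a A B t x) <= Rpower x a * R.
Proof.
  intros H1 H2. unfold P. rewrite Rabs_mult.
  rewrite (Rabs_right (Rpower x a)) by (left; apply exp_pos).
  apply Rmult_le_compat_l. left; apply exp_pos. apply trig_bound; auto.
Qed.

Lemma rpow_le x y a b : 1 <= y <= x -> a <= b -> b <= 0 -> Rpower x a <= Rpower y b.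
Proof.
  intros H1 H2 H3. unfold Rpower.
  destruct (Req_dec (a * ln x) (b * ln y)) as [E|E]; [rewrite E; lra|].
  left. apply exp_increasing.
  assert (0 <= ln y) by (rewrite <- ln_1; apply ln_le; lra).
  assert (ln y <= ln x) by (apply ln_le; lra).
  nra.
Qed.

Lemma rpow_m3 y : 0 < y -> Rpower y (-3) = / (y^3).
Proof.
  intros H. replace (-3) with (- INR 3) by (simpl; ring). rewrite Rpower_Ropp.
  rewrite Rpower_pow by auto. reflexivity.
Qed.

Lemma rpow_m1 y : 0 < y -> Rpower y (-1) = / y.
Proof.
  intros H. replace (-1) with (- (1)) by ring. rewrite Rpower_Ropp, Rpower_1 by auto. reflexivity.
Qed.

Definition Dd s t := (1 - s)^2 + t^2.
Definition Gf s t p q := P (-s) p q t.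
Definition Hf s t p q := P (1 - s) ((p * (1 - s) - q * t) / Dd s t) ((p * t + q * (1 - s)) / Dd s t) t.
Definition A1 s t p q := -s * p + t * q.
Definition B1 s t p q := -s * q - t * p.
Definition G1f s t p q := P (-s-1) (A1 s t p q) (B1 s t p q) t.
Definition G2f s t p q := P (-s-2) ((-s-1) * A1 s t p q + t * B1 s t p q) ((-s-1) * B1 s t p q - t * A1 s t p q) t.

Lemma Dd_pos s t : 1 <= t -> 0 < Dd s t.
Proof. intros; unfold Dd. assert (0 <= (1-s)^2) by apply pow2_ge_0. nra. Qed.

Lemma derH s t p q x : 1 <= t -> 0 < x -> is_derive (Hf s t p q) x (Gf s t p q x).
Proof.
  intros Ht Hx. unfold Hf. eapply der_eq. apply P_der; auto.
  pose proof (Dd_pos s t Ht). unfold Gf. f_equal.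
  - ring.
  - unfold Dd in *. field. lra.
  - unfold Dd in *. field. lra.
Qed.

Lemma derG s t p q x : 0 < x -> is_derive (Gf s t p q) x (G1f s t p q x).
Proof.
  intros Hx. unfold Gf. eapply der_eq. apply P_der; auto.
  unfold G1f, A1, B1. f_equal; ring.
Qed.

Lemma derG1 s t p q x : 0 < x -> is_derive (G1f s t p q) x (G2f s t p q x).
Proof.
  intros Hx. unfold G1f. eapply der_eq. apply P_der; auto.
  unfold G2f. f_equal; ring.
Qed.

Lemma G2_bound s t p q x : 1 <= s <= 2 -> 3 <= t -> p^2 + q^2 = 1 -> 1 <= x ->
  Rabs (G2f s t p q x) <= Rpower x (-3) * (t^2 + 9).
Proof.
  intros Hs Ht Hpq Hx. unfold G2f.
  eapply Rle_trans. apply P_bound.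
  - set (A := A1 s t p q). set (B := B1 s t p q).
    replace (((- s - 1) * A + t * B) ^ 2 + ((- s - 1) * B - t * A) ^ 2)
      with (((s+1)^2 + t^2) * (A^2 + B^2)) by ring.
    replace (A^2 + B^2) with ((s^2 + t^2) * (p^2 + q^2)) by (unfold A, B, A1, B1; ring).
    rewrite Hpq.
    assert (0 <= (s+1)^2 + t^2 <= t^2 + 9) by (split; nra).
    assert (0 <= s^2 + t^2 <= t^2 + 9) by (split; nra).
    rewrite Rmult_1_r. replace ((t^2+9)^2) with ((t^2+9)*(t^2+9)) by ring. apply Rmult_le_compat; lra.
  - nra.
  - apply Rmult_le_compat_r. nra. apply rpow_le; lra.
Qed.

Lemma G_bound s t p q x : 1 <= s -> p^2 + q^2 = 1 -> 1 <= x ->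
  Rabs (Gf s t p q x) <= / x.
Proof.
  intros Hs Hpq Hx. unfold Gf.
  eapply Rle_trans. apply (P_bound _ _ _ _ _ 1). nra. lra.
  rewrite Rmult_1_r, <- rpow_m1 by lra. apply rpow_le; lra.
Qed.

Lemma H_bound s t p q x : 1 <= s -> 1 <= t -> p^2 + q^2 = 1 -> 1 <= x ->
  Rabs (Hf s t p q x) <= / t.
Proof.
  intros Hs Ht Hpq Hx. unfold Hf.
  pose proof (Dd_pos s t ltac:(lra)) as HD.
  eapply Rle_trans. apply (P_bound _ _ _ _ _ (/ t)).
  - replace (((p * (1 - s) - q * t) / Dd s t) ^ 2 + ((p * t + q * (1 - s)) / Dd s t) ^ 2)
      with ((p^2 + q^2) / Dd s t).
    2:{ unfold Dd in *. field. lra. }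
    rewrite Hpq. unfold Dd. 
    replace ((/ t)^2) with (1 / t^2) by (field; lra).
    apply Rmult_le_compat_l. lra. apply Rinv_le_contravar. nra. nra.
  - left; apply Rinv_0_lt_compat; lra.
  - rewrite <- (Rmult_1_l (/ t)) at 2. apply Rmult_le_compat_r.
    left; apply Rinv_0_lt_compat; lra.
    unfold Rpower.
    assert (0 <= ln x) by (rewrite <- ln_1; apply ln_le; lra).
    destruct (Req_dec ((1-s)*ln x) 0) as [E|E]; [rewrite E, exp_0; lra|].
    apply Rlt_le, (Rlt_le_trans _ (exp 0)); [apply exp_increasing; nra | rewrite exp_0; lra].
Qed.

Lemma e_bound s t p q c : 1 <= s <= 2 -> 3 <= t -> p^2 + q^2 = 1 -> 3/2 <= c ->
  Rabs (Gf s t p q c - (Hf s t p q (c + /2) - Hf s t p q (c - /2)))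
    <= (t^2 + 9) / 24 / (c - /2)^3.
Proof.
  intros Hs Ht Hpq Hc.
  replace ((t^2 + 9) / 24 / (c - /2)^3) with ((t^2 + 9) / (c - /2)^3 / 24) by (field; lra).
  apply (midpoint _ _ (G1f s t p q) (G2f s t p q)).
  intros x Hx. split; [|split; [|split]].
  - apply derH; lra.
  - apply derG; lra.
  - apply derG1; lra.
  - eapply Rle_trans. apply G2_bound; auto; lra.
    rewrite Rmult_comm. unfold Rdiv. apply Rmult_le_compat_l. nra.
    rewrite <- rpow_m3 by lra. apply rpow_le; lra.
Qed.

Fixpoint ssum (f : nat -> R) (n : nat) : R :=
  match n with O => 0 | S n => ssum f n + f n end.

Lemma sum_n_ssum (f : nat -> R) m : sum_n f m = ssum f (S m).
Proof.
  induction m.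
  - rewrite sum_O. simpl. ring.
  - rewrite sum_Sn, IHm. simpl. unfold plus; simpl. ring.
Qed.

Lemma ssum_split f N n : ssum f (N + n) = ssum f N + ssum (fun j => f (N + j)%nat) n.
Proof.
  induction n.
  - rewrite Nat.add_0_r. simpl. ring.
  - rewrite Nat.add_succ_r. simpl. rewrite IHn. ring.
Qed.

Lemma ssum_le f g n : (forall k, (k < n)%nat -> f k <= g k) -> ssum f n <= ssum g n.
Proof.
  induction n; intros H; simpl. lra.
  assert (f n <= g n) by (apply H; lia).
  assert (ssum f n <= ssum g n) by (apply IHn; intros; apply H; lia). lra.
Qed.

Lemma ssum_abs f n : Rabs (ssum f n) <= ssum (fun k => Rabs (f k)) n.
Proof.
  induction n; simpl. rewrite Rabs_R0; lra.
  eapply Rle_trans. apply Rabs_triang. lra.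
Qed.

Lemma ssum_ext f g n : (forall k, (k < n)%nat -> f k = g k) -> ssum f n = ssum g n.
Proof.
  induction n; intros H; simpl. auto.
  rewrite IHn, H; auto; intros; apply H; lia.
Qed.

Lemma re_sum (f : nat -> C) p q m :
  p * Re (sum_n f m) - q * Im (sum_n f m) = ssum (fun k => p * Re (f k) - q * Im (f k)) (S m).
Proof.
  induction m.
  - rewrite sum_O. simpl. ring.
  - rewrite sum_Sn. simpl in *. unfold Re, Im in *. rewrite <- IHm. ring.
Qed.

Lemma term_G s t p q (x : R) : 0 < x ->
  p * Re (cpow x (Copp (s, t))) - q * Im (cpow x (Copp (s, t))) = Gf s t p q x.
Proof.
  intros Hx. unfold cpow, Gf, P. simpl.
  replace (- t * ln x) with (- (t * ln x)) by ring.
  rewrite cos_neg, sin_neg. ring.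
Qed.

Lemma term_H s t p q (x : R) : 0 < x -> 1 <= t ->
  p * Re (Cdiv (cpow x (Cminus 1 (s, t))) (Cminus 1 (s, t)))
  - q * Im (Cdiv (cpow x (Cminus 1 (s, t))) (Cminus 1 (s, t))) = Hf s t p q x.
Proof.
  intros Hx Ht. pose proof (Dd_pos s t Ht) as HD.
  unfold cpow, Hf, P, Dd in *. simpl.
  replace ((0 + - t) * ln x) with (- (t * ln x)) by ring.
  replace (0 + - t) with (- t) by ring.
  rewrite cos_neg, sin_neg. change (Rpower x (1 + - s)) with (Rpower x (1 - s)). field. nra.
Qed.

Lemma w_eq s t p q M : 1 <= t ->
  p * Re (zeta_approx (s, t) M) - q * Im (zeta_approx (s, t) M)
  = ssum (fun k => Gf s t p q (INR k + 1)) (S M) - Hf s t p q (INR M + 1).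
Proof.
  intros Ht. unfold zeta_approx.
  transitivity ((p * Re (sum_n (fun k : nat => cpow (INR (S k)) (Copp (s, t))) M)
     - q * Im (sum_n (fun k : nat => cpow (INR (S k)) (Copp (s, t))) M))
     - (p * Re (Cdiv (cpow (INR (S M)) (Cminus 1 (s, t))) (Cminus 1 (s, t)))
     - q * Im (Cdiv (cpow (INR (S M)) (Cminus 1 (s, t))) (Cminus 1 (s, t))))).
  { simpl. ring. }
  rewrite re_sum, term_H; auto. 2: apply lt_0_INR; lia.
  rewrite S_INR. f_equal. apply ssum_ext. intros k _.
  rewrite term_G. now rewrite S_INR. apply lt_0_INR; lia.
Qed.

Definition ek s t p q k := let c := INR k + 1 in
  Gf s t p q c - (Hf s t p q (c + /2) - Hf s t p q (c - /2)).

Lemma telesc s t p q n :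
  ssum (fun k => Gf s t p q (INR k + 1)) n = ssum (ek s t p q) n + Hf s t p q (INR n + /2) - Hf s t p q (/2).
Proof.
  induction n.
  - simpl. replace (0 + /2) with (/2) by lra. lra.
  - simpl ssum. rewrite IHn. unfold ek. rewrite S_INR.
    replace (INR n + 1 - /2) with (INR n + /2) by field. ring.
Qed.

Lemma ln_mid c : 1 <= c -> / c <= ln (c + /2) - ln (c - /2).
Proof.
  intros Hc.
  assert (E := cmp_le (fun h => 2 * h / c) (fun h => ln (c + h) - ln (c - h))
                      (fun _ => 2 / c) (fun h => / (c + h) + / (c - h)) 0 (/2) ltac:(lra)).
  cbv beta in E.
  replace (ln (c + 0) - ln (c - 0)) with 0 in E by (rewrite Rplus_0_r, Rminus_0_r; ring).
  replace (2 * / 2 / c - 2 * 0 / c) with (/ c) in E by (field; lra).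
  rewrite Rminus_0_r in E. apply E. intros h Hh. split; [|split].
  - auto_derive; auto. field; lra.
  - auto_derive. repeat split; lra. field; lra.
  - assert (/ (c + h) + / (c - h) - 2 / c = 2 * h^2 / (c * (c + h) * (c - h))) by (field; repeat split; lra).
    assert (0 <= 2 * h^2 / (c * (c + h) * (c - h))).
    { unfold Rdiv. apply Rmult_le_pos. nra. left. apply Rinv_0_lt_compat.
      apply Rmult_lt_0_compat. apply Rmult_lt_0_compat. lra. lra. lra. }
    lra.
Qed.

Lemma harmonic m : ssum (fun k => / (INR k + 1)) (S m) <= ln (INR (S m) + /2) + 1 - ln (3/2).
Proof.
  induction m.
  - simpl. replace (1 + /2) with (3/2) by field. replace (0 + 1) with 1 by ring. rewrite Rinv_1. lra.
  - change (ssum (fun k => / (INR k + 1)) (S (S m))) with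
      (ssum (fun k => / (INR k + 1)) (S m) + / (INR (S m) + 1)).
    assert (H := ln_mid (INR (S m) + 1)). rewrite (S_INR (S m)).
    assert (1 <= INR (S m) + 1) by (pose proof (pos_INR (S m)); lra).
    specialize (H H0). replace (INR (S m) + 1 - /2) with (INR (S m) + /2) in H by field.
    lra.
Qed.

Lemma cube_tel k : 1 <= k -> / (k + /2)^3 <= / (2 * k^2) - / (2 * (k+1)^2).
Proof.
  intros Hk.
  assert (E : / (2 * k^2) - / (2 * (k+1)^2) - / (k + /2)^3
     = (8 * k^2 + 8 * k + 1) / (2 * k^2 * (k+1)^2 * (2 * k + 1)^3)).
  { field. repeat split; try nra. }
  assert (0 <= (8 * k^2 + 8 * k + 1) / (2 * k^2 * (k+1)^2 * (2 * k + 1)^3)).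
  { unfold Rdiv. apply Rmult_le_pos. nra. left. apply Rinv_0_lt_compat.
    assert (0 < k^2) by nra. assert (0 < (k+1)^2) by nra. assert (0 < (2*k+1)^3) by (apply pow_lt; lra).
    repeat apply Rmult_lt_0_compat; lra. }
  lra.
Qed.

Lemma term_bound s t p q k : 1 <= s <= 2 -> 3 <= t -> p^2 + q^2 = 1 -> (1 <= k)%nat ->
  Rabs (ek s t p q k) <= (t^2 + 9) / 24 * (/ (2 * INR k ^ 2) - / (2 * INR (S k) ^ 2)).
Proof.
  intros Hs Ht Hpq Hk1. unfold ek.
  assert (Hk : 1 <= INR k) by (apply (le_INR 1); lia).
  eapply Rle_trans. apply e_bound; auto; lra.
  replace (INR k + 1 - /2) with (INR k + /2) by field.
  rewrite S_INR. unfold Rdiv. apply Rmult_le_compat_l. nra.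
  apply cube_tel; auto.
Qed.

Lemma tail_bound s t p q N m : 1 <= s <= 2 -> 3 <= t -> p^2 + q^2 = 1 -> (1 <= N)%nat ->
  ssum (fun j => Rabs (ek s t p q (N + j))) m <= (t^2 + 9) / 24 * / (2 * INR N ^ 2).
Proof.
  intros Hs Ht Hpq HN.
  set (K := (t^2 + 9) / 24).
  set (a := fun k : nat => / (2 * INR k ^ 2)).
  assert (HK : 0 <= K) by (unfold K; nra).
  eapply Rle_trans.
  { apply (ssum_le _ (fun j => K * (a (N + j)%nat - a (S (N + j))))).
    intros j _. unfold ek, a.
    assert (Hk : 1 <= INR (N + j)) by (apply (le_INR 1); lia).
    eapply Rle_trans. apply e_bound; auto; lra.
    replace (INR (N + j) + 1 - /2) with (INR (N + j) + /2) by field.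
    rewrite S_INR. unfold Rdiv. fold K. apply Rmult_le_compat_l; auto.
    apply cube_tel; auto. }
  assert (T : forall m, ssum (fun j => K * (a (N + j)%nat - a (S (N + j)))) m = K * (a N - a (N + m)%nat)).
  { induction m0. simpl. rewrite Nat.add_0_r. ring.
    simpl. rewrite IHm0. rewrite Nat.add_succ_r. ring. }
  rewrite T. apply Rmult_le_compat_l; auto.
  assert (0 <= a (N + m)%nat). { unfold a. destruct (N+m)%nat. simpl. rewrite Rmult_0_l, Rmult_0_r, Rinv_0. lra.
     left. apply Rinv_0_lt_compat. pose proof (lt_0_INR (S n) ltac:(lia)). nra. }
  unfold a in *. lra.
Qed.

Lemma Hdiff_bound s t p q y : 1 <= s -> 1 <= t -> p^2 + q^2 = 1 -> 1 <= y ->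
  Rabs (Hf s t p q (y + /2) - Hf s t p q y) <= / (2 * y).
Proof.
  intros Hs Ht Hpq Hy.
  assert (E := cmp (Hf s t p q) (fun x => x / y) (Gf s t p q) (fun _ => / y) y (y + /2) ltac:(lra)).
  replace (/ (2 * y)) with ((y + /2) / y - y / y) by (field; lra).
  apply E. intros x Hx. split; [|split].
  - apply derH; lra.
  - auto_derive; auto. field. lra.
  - eapply Rle_trans. apply G_bound; auto; lra. apply Rinv_le_contravar; lra.
Qed.

Lemma lim_inv : is_lim_seq (fun M => / (INR M + 1)) 0.
Proof.
  assert (H : is_lim_seq (fun M => INR M + 1) p_infty).
  { apply is_lim_seq_incr_1 in is_lim_seq_INR || idtac.
    apply (is_lim_seq_ext (fun M => INR (S M))). intros; apply S_INR.
    apply -> (is_lim_seq_incr_1 INR). apply is_lim_seq_INR. }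
  apply (is_lim_seq_inv _ _ H). discriminate.
Qed.

Lemma exp_17 : exp (17/10) <= 74/10.
Proof.
  replace (17/10) with (1 + (35/100 + 35/100)) by field.
  rewrite !exp_plus.
  assert (E1 : 65/100 <= exp (- (35/100))) by (pose proof (exp_ineq1_le (- (35/100))); lra).
  assert (E2 : exp (35/100) <= 100/65).
  { rewrite <- (Rinv_inv (exp (35/100))), <- exp_Ropp.
    replace (100/65) with (/ (65/100)) by field.
    apply Rinv_le_contravar; lra. }
  pose proof exp_le_3. pose proof (exp_pos 1). pose proof (exp_pos (35/100)).
  assert (exp (35/100) * exp (35/100) <= 100/65 * (100/65)) by (apply Rmult_le_compat; lra).
  assert (exp 1 * (exp (35/100) * exp (35/100)) <= 3 * (100/65 * (100/65))) by (apply Rmult_le_compat; nra).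
  lra.
Qed.

Lemma numeric (t n : R) : 500 <= t -> n <= t/5 < n + 1 ->
  ln (n + /2) + 1 - ln (3/2) + / t + (t^2 + 9) / 24 * / (2 * n^2) < ln t - 0.14.
Proof.
  intros Ht [H1 H2].
  assert (Hn : 99 <= n) by lra.
  assert (LX : 17/10 <= ln (3/2 * t / (n + /2))).
  { rewrite <- (ln_exp (17/10)). apply ln_le. apply exp_pos.
    eapply Rle_trans. apply exp_17.
    replace (3 / 2 * t / (n + / 2)) with ((3/2 * t) * / (n + /2)) by (unfold Rdiv; ring).
    apply (Rmult_le_reg_r (n + /2)). lra. rewrite Rmult_assoc, Rinv_l by lra.
    rewrite Rmult_1_r. lra. }
  assert (LE : ln (3/2 * t / (n + /2)) = ln (3/2) + ln t - ln (n + /2)).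
  { unfold Rdiv. assert (0 < / (n + /2)) by (apply Rinv_0_lt_compat; lra).
    rewrite ln_mult by (try apply Rmult_lt_0_compat; lra).
    rewrite ln_mult by lra. rewrite ln_Rinv by lra. ring. }
  assert (T1 : / t <= 1/500). { replace (1/500) with (/500) by field. apply Rinv_le_contravar; lra. }
  assert (T2 : (t^2 + 9) / 24 * / (2 * n^2) <= 54/100).
  { assert (0 < 2 * n^2) by nra.
    apply (Rmult_le_reg_r (2 * n^2)); auto.
    unfold Rdiv. rewrite Rmult_assoc, Rinv_l by lra.
    assert (n >= t/5 - 1) by lra.
    assert (n^2 >= (t/5 - 1)^2) by nra. nra. }
  lra.
Qed.

Lemma lim_a N : (1 <= N)%nat -> is_lim_seq (fun m => / (2 * INR (N + S m) ^ 2)) 0.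
Proof.
  intros HN.
  apply (is_lim_seq_le_le (fun _ => 0) _ (fun m => / (INR m + 1))).
  - intros m. assert (INR m + 1 <= INR (N + S m)).
    { rewrite <- S_INR. apply le_INR. lia. }
    pose proof (pos_INR m). split.
    + left. apply Rinv_0_lt_compat. nra.
    + apply Rinv_le_contravar. lra. nra.
  - apply is_lim_seq_const.
  - apply lim_inv.
Qed.

Lemma ex_series_ek s t p q : 1 <= s <= 2 -> 3 <= t -> p^2 + q^2 = 1 -> ex_series (ek s t p q).
Proof.
  intros Hs Ht Hpq.
  apply (ex_series_incr_n _ 1).
  set (K := (t^2 + 9) / 24).
  set (a := fun k : nat => / (2 * INR k ^ 2)).
  apply (@ex_series_le R_AbsRing R_CompleteNormedModule _ (fun j => K * (a (1 + j)%nat - a (S (1 + j))))).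
  - intros j. change (norm (ek s t p q (1 + j))) with (Rabs (ek s t p q (1 + j))).
    apply term_bound; auto. lia.
  - exists (K * a 1%nat).
    assert (T : forall m, K * (a 1%nat - a (1 + S m)%nat) = sum_n (fun j => K * (a (1 + j)%nat - a (S (1 + j)))) m).
    { intros m. rewrite sum_n_ssum. induction m. simpl. ring.
      change (ssum (fun j => K * (a (1 + j)%nat - a (S (1 + j)))) (S (S m)))
        with (ssum (fun j => K * (a (1 + j)%nat - a (S (1 + j)))) (S m) + K * (a (1 + S m)%nat - a (S (1 + S m)))).
      rewrite <- IHm. replace (S (1 + S m)) with (1 + S (S m))%nat by lia. ring. }
    change (is_lim_seq (sum_n (fun j => K * (a (1 + j)%nat - a (S (1 + j))))) (K * a 1%nat)).
    apply (is_lim_seq_ext (fun m => K * (a 1%nat - a (1 + S m)%nat))).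
    intros; now rewrite <- T.
    replace (K * a 1%nat) with (K * (a 1%nat - 0)) by ring.
    apply (is_lim_seq_scal_l _ K (a 1%nat - 0)).
    apply (is_lim_seq_minus' (fun _ => a 1%nat)). apply is_lim_seq_const.
    apply lim_a. lia.
Qed.

Lemma lim_half : is_lim_seq (fun M => / 2 * / (INR M + 1)) 0.
Proof.
  replace (Finite 0) with (Rbar_mult (/2) 0) by (simpl; f_equal; ring).
  apply is_lim_seq_scal_l, lim_inv.
Qed.

Lemma lim_half_neg : is_lim_seq (fun M => - (/ 2 * / (INR M + 1))) 0.
Proof.
  apply (is_lim_seq_ext (fun M => -1 * (/ 2 * / (INR M + 1)))). intros; ring.
  replace (Finite 0) with (Rbar_mult (-1) 0) by (simpl; f_equal; ring).
  apply is_lim_seq_scal_l, lim_half.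
Qed.

Lemma main_u s t p q : 1 <= s <= 2 -> 500 <= t -> p^2 + q^2 = 1 ->
  exists L : R, is_lim_seq (fun M => p * Re (zeta_approx (s, t) M) - q * Im (zeta_approx (s, t) M)) L
            /\ L < ln t - 0.14.
Proof.
  intros Hs Ht Hpq.
  destruct (nfloor_ex (t/5)) as [N HN]. lra.
  assert (HN1 : (1 <= N)%nat). { destruct N. simpl in HN. lra. lia. }
  set (w := fun M => p * Re (zeta_approx (s, t) M) - q * Im (zeta_approx (s, t) M)).
  assert (Wrep : forall M, w M = sum_n (ek s t p q) M
      + (Hf s t p q (INR M + 1 + /2) - Hf s t p q (INR M + 1)) - Hf s t p q (/2)).
  { intros M. unfold w. rewrite w_eq by lra. rewrite telesc. rewrite sum_n_ssum. rewrite S_INR. ring. }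
  assert (Hd : forall M, Rabs (Hf s t p q (INR M + 1 + /2) - Hf s t p q (INR M + 1)) <= / 2 * / (INR M + 1)).
  { intros M. rewrite <- Rinv_mult. apply Hdiff_bound; try lra.
    pose proof (pos_INR M). lra. }
  assert (CV : is_lim_seq w (Series (ek s t p q) + 0 - Hf s t p q (/2))).
  { apply (is_lim_seq_ext (fun M => sum_n (ek s t p q) M
      + (Hf s t p q (INR M + 1 + /2) - Hf s t p q (INR M + 1)) - Hf s t p q (/2))).
    { intros; symmetry; apply Wrep. }
    apply (is_lim_seq_minus' _ (fun _ => Hf s t p q (/2))); [|apply is_lim_seq_const].
    apply is_lim_seq_plus'.
    + apply (Series_correct _ (ex_series_ek s t p q Hs ltac:(lra) Hpq)).
    + apply (is_lim_seq_le_le (fun M => - (/ 2 * / (INR M + 1))) _ (fun M => / 2 * / (INR M + 1))).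
      * intros M. apply Rabs_le_between. apply Hd.
      * apply lim_half_neg.
      * apply lim_half. }
  exists (Series (ek s t p q) + 0 - Hf s t p q (/2)).
  split. exact CV.
  - set (B := ln (INR N + /2) + 1 - ln (3/2) + / t + (t^2 + 9) / 24 * / (2 * INR N ^ 2)).
    assert (LB : Rbar_le (Series (ek s t p q) + 0 - Hf s t p q (/2)) (B + 0)).
    { apply (is_lim_seq_le_loc w (fun M => B + / 2 * / (INR M + 1))).
      - exists N. intros M HM. 
        replace M with (N + (M - N))%nat in * by lia. set (m := (M - N)%nat) in *. clearbody m.
        unfold w. rewrite w_eq by lra.
        rewrite telesc.
        replace (S (N + m)) with (N + S m)%nat by lia.
        rewrite ssum_split.
        assert (TN := telesc s t p q N).
        assert (Hh : ssum (fun k => Gf s t p q (INR k + 1)) N <= ln (INR N + /2) + 1 - ln (3/2)).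
        { destruct N as [|N']. lia.
          eapply Rle_trans; [|apply harmonic].
          apply ssum_le. intros k _. eapply Rle_trans. apply Rle_abs.
          apply G_bound; try lra. pose proof (pos_INR k); lra. }
        assert (Htl : ssum (fun j => ek s t p q (N + j)) (S m) <= (t^2 + 9) / 24 * / (2 * INR N ^ 2)).
        { eapply Rle_trans. apply Rle_abs. eapply Rle_trans. apply ssum_abs.
          apply tail_bound; auto; lra. }
        assert (HNb : - Hf s t p q (INR N + /2) <= / t).
        { assert (1 <= INR N) by (apply (le_INR 1); auto).
          assert (HB := H_bound s t p q (INR N + /2) ltac:(lra) ltac:(lra) Hpq ltac:(lra)).
          apply Rabs_le_between in HB. lra. }
        assert (HD := Hd (N + m)%nat). apply Rabs_le_between in HD.
        replace (N + S m)%nat with (S (N + m)) by lia. rewrite S_INR. 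
        unfold B. lra.
      - exact CV.
      - apply is_lim_seq_plus'. apply is_lim_seq_const. apply lim_half. }
    simpl in LB. assert (NB := numeric t (INR N) Ht HN). fold B in NB. eapply Rle_lt_trans; [exact LB|]. rewrite Rplus_0_r. exact NB.
Qed.

Theorem proposition7 (sigma t : R) :
  1 <= sigma <= 2 -> 500 <= t ->
  Cmod (zeta (sigma, t)) < ln t - 0.14.
Proof.
  intros Hs Ht.
  destruct (main_u sigma t 1 0 Hs Ht ltac:(ring)) as [L1 [C1 _]].
  destruct (main_u sigma t 0 (-1) Hs Ht ltac:(ring)) as [L2 [C2 _]].
  assert (R1 : is_lim_seq (fun M => Re (zeta_approx (sigma, t) M)) L1).
  { eapply is_lim_seq_ext; [|exact C1]. intros; simpl; ring. }
  assert (R2 : is_lim_seq (fun M => Im (zeta_approx (sigma, t) M)) L2).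
  { eapply is_lim_seq_ext; [|exact C2]. intros; simpl; ring. }
  assert (Z : zeta (sigma, t) = (L1, L2)).
  { unfold zeta. rewrite (is_lim_seq_unique _ _ R1), (is_lim_seq_unique _ _ R2). reflexivity. }
  rewrite Z. unfold Cmod. simpl fst; simpl snd.
  set (r := sqrt (L1 ^ 2 + L2 ^ 2)).
  assert (Hr2 : r * r = L1 ^ 2 + L2 ^ 2).
  { unfold r. apply sqrt_sqrt. nra. }
  assert (Hr0 : 0 <= r) by (unfold r; apply sqrt_pos).
  assert (Hln : 1 <= ln t).
  { rewrite <- ln_exp at 1. apply ln_le. apply exp_pos. pose proof exp_le_3. lra. }
  destruct (Req_dec r 0) as [E|E].
  { rewrite E. lra. }
  assert (Hrp : 0 < r) by lra.
  destruct (main_u sigma t (L1 / r) (- L2 / r) Hs Ht) as [L [C L_lt]].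
  { field_simplify; [|lra]. rewrite <- Hr2. field. lra. }
  assert (C' : is_lim_seq (fun M => L1 / r * Re (zeta_approx (sigma, t) M)
                                  - - L2 / r * Im (zeta_approx (sigma, t) M))
                          (L1 / r * L1 - - L2 / r * L2)).
  { apply is_lim_seq_minus'; apply (is_lim_seq_scal_l _ _ (Finite _)); auto. }
  apply is_lim_seq_unique in C. apply is_lim_seq_unique in C'.
  rewrite C in C'. injection C' as C'.
  assert (r = L1 / r * L1 - - L2 / r * L2).
  { apply (Rmult_eq_reg_r r); [|lra]. field_simplify; [|lra]. rewrite <- Hr2. field. }
  lra.
Qed.
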